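(* Let $N,d\ge1$, $\lambda,\tau>0$ with $\lambda\tau\le\frac12$, and let $\psi:[0,\infty)\to(0,\infty)$ be positive, nonincreasing, differentiable with $\psi(r)\le1$ for all $r\ge0$. Let $(x_i,v_i)_{i=1}^N$ solve $$\dot x_i(t)=v_i(t),\qquad \dot v_i(t)=\frac{\lambda}{N}\sum_{j=1}^N\psi(|x_i(t-\tau)-x_j(t-\tau)|)\,(v_j(t-\tau)-v_i(t-\tau)),\qquad t>0,$$ with initial data $(x_i,v_i)=(x_i^0,v_i^0)$ on $[-\tau,0]$, $(x_i^0,v_i^0)\in C([-\tau,0];\mathbb{R}^{2d})\cap C^1((-\tau,0);\mathbb{R}^{2d})$. Then $$\varphi(t)\ge\psi\big(d_X(0)+\sqrt{2L^0}\,t\big)\qquad\text{for all }t>\tau.$$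
   Context: $\varphi(t):=\min_{i,j}\psi(|x_i(t)-x_j(t)|)$ and $d_X(t):=\max_{i,j}|x_i(t)-x_j(t)|$. $V(t):=\frac12\sum_{i,j=1}^N|v_i(t)-v_j(t)|^2$, $D(t):=\frac12\sum_{i,j=1}^N\psi(|x_i(t)-x_j(t)|)\,|v_j(t)-v_i(t)|^2$, and $L^0:=(2\lambda\tau+1)e^{2\lambda\tau}\max_{\vartheta\in[-\tau,0]}V(\vartheta)+4\tau\lambda^3\int_{-\tau}^0\int_\theta^0 D(s)\,ds\,d\theta$. *)

(* Defs.v *)
From HB Require Import structures.
From mathcomp Require Import all_boot all_order all_algebra.
From mathcomp Require Import all_classical all_reals all_analysis.
Set Implicit Arguments. Unset Strict Implicit. Unset Printing Implicit Defensive.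
Import Order.TTheory GRing.Theory Num.Theory.
Import numFieldNormedType.Exports.
Local Open Scope classical_set_scope.
Local Open Scope ring_scope.

Definition enorm {R : realType} {d : nat} (u : 'I_d -> R) : R :=
  Num.sqrt (\sum_(k < d) u k ^+ 2).

Section CS.
Variables (R : realType) (N d : nat).
(* x i k t : k-th coordinate of the position of particle i at time t *)
Variables (x v : 'I_N -> 'I_d -> R -> R).

Definition posdiff (i j : 'I_N) (t : R) : 'I_d -> R := fun k => x i k t - x j k t.
Definition veldiff (i j : 'I_N) (t : R) : 'I_d -> R := fun k => v i k t - v j k t.

(* phi(t) = min_{i,j} psi(|x_i(t) - x_j(t)|); the neutral element 1 is harmless
   since the range contains i = j (N >= 1) and psi <= 1. *)
Definition phiCS (psi : R -> R) (t : R) : R :=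
  \big[Num.min/1]_(i < N) \big[Num.min/1]_(j < N) psi (enorm (posdiff i j t)).

(* d_X(t) = max_{i,j} |x_i(t) - x_j(t)| (neutral 0 harmless, norms >= 0). *)
Definition dX (t : R) : R :=
  \big[Num.max/0]_(i < N) \big[Num.max/0]_(j < N) enorm (posdiff i j t).

Definition VCS (t : R) : R :=
  2^-1 * \sum_(i < N) \sum_(j < N) enorm (veldiff i j t) ^+ 2.

Definition DCS (psi : R -> R) (t : R) : R :=
  2^-1 * \sum_(i < N) \sum_(j < N)
     psi (enorm (posdiff i j t)) * enorm (veldiff j i t) ^+ 2.

(* L^0; the max over [-tau,0] of the continuous function V is written as a sup. *)
Definition L0 (psi : R -> R) (lambda tau : R) : R :=
  (2 * lambda * tau + 1) * expR (2 * lambda * tau) * sup (VCS @` `[- tau, 0])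
  + 4 * tau * lambda ^+ 3 *
    Rintegral lebesgue_measure `[- tau, 0]
      (fun theta => Rintegral lebesgue_measure `[theta, 0] (DCS psi)).
End CS.

(* Main.v *)
From HB Require Import structures.
From mathcomp Require Import all_boot all_order all_algebra.
From mathcomp Require Import all_classical all_reals all_analysis.
From mathcomp Require Import ring lra.
Set Implicit Arguments. Unset Strict Implicit. Unset Printing Implicit Defensive.
Import Order.TTheory GRing.Theory Num.Theory.
Import numFieldNormedType.Exports.
Local Open Scope classical_set_scope.
Local Open Scope ring_scope.
Require Import Defs.

Section Aux.
Context {R : realType}.
Implicit Types (A B : set R) (f g h : R -> R).

Lemma wcomp A B f h :
  {within B, continuous f} -> {within A, continuous h} ->
  (forall y, A y -> B (h y)) -> {within A, continuous (f \o h)}.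
Proof.
move=> /subspace_continuousP cf /subspace_continuousP ch AB.
apply/subspace_continuousP => x Ax.
have hB : h @ within A (nbhs x) --> within B (nbhs (h x)).
  move=> W /= WB.
  have := ch x Ax _ WB.
  rewrite /= !nbhs_simpl /within /=.
  apply: filterS => y H Ay; exact: H (AB _ Ay) .
exact: (cvg_comp h f hB (cf (h x) (AB x Ax))).
Qed.

Lemma wcD A f g : {within A, continuous f} -> {within A, continuous g} ->
  {within A, continuous (fun t => f t + g t)}.
Proof. by move=> cf cg x; apply: continuousD; [exact: cf|exact: cg]. Qed.

Lemma wcB A f g : {within A, continuous f} -> {within A, continuous g} ->
  {within A, continuous (fun t => f t - g t)}.
Proof. by move=> cf cg x; apply: continuousB; [exact: cf|exact: cg]. Qed.

Lemma wcM A f g : {within A, continuous f} -> {within A, continuous g} ->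
  {within A, continuous (fun t => f t * g t)}.
Proof. by move=> cf cg x; apply: continuousM; [exact: cf|exact: cg]. Qed.

Lemma wc_cst A (c : R) : {within A, continuous (fun _ => c)}.
Proof. by apply: continuous_subspaceT => x; exact: cst_continuous. Qed.

Lemma wc_sum A n (F : 'I_n -> R -> R) :
  (forall i, {within A, continuous (F i)}) ->
  {within A, continuous (fun t => \sum_(i < n) F i t)}.
Proof.
move=> cF; elim: n F cF => [|n IH] F cF.
  under eq_fun do rewrite big_ord0; exact: wc_cst.
under eq_fun do rewrite big_ord_recr /=.
apply: wcD; last exact: cF.
exact: (IH (fun i => F (widen_ord (leqnSn n) i))).
Qed.

Lemma wc_sqrt A f : {within A, continuous f} ->
  {within A, continuous (fun t => Num.sqrt (f t))}.
Proof.
move=> cf; apply: (@wcomp A setT (@Num.sqrt R) f) => //.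
exact/continuous_subspaceT/sqrt_continuous.
Qed.

Lemma wc_shift A B f (c : R) : {within B, continuous f} ->
  (forall y, A y -> B (y - c)) -> {within A, continuous (fun t => f (t - c))}.
Proof.
move=> cf AB; apply: (@wcomp A B f (fun t => t - c)) => //.
apply: continuous_subspaceT => x; apply: continuousB => //; exact: cst_continuous.
Qed.

Notation mu := (@lebesgue_measure R).

Lemma cint (a b : R) f : {within `[a, b], continuous f} ->
  mu.-integrable `[a, b] (EFin \o f).
Proof. by move=> cf; apply: continuous_compact_integrable => //; exact: segment_compact. Qed.

Lemma mu_itv (a b : R) : a <= b -> fine (mu `[a, b]) = b - a.
Proof.
rewrite le_eqVlt => /predU1P[<-|ab].
  by rewrite set_itv1 lebesgue_measure_set1 subrr.
by rewrite lebesgue_measure_itv /= lte_fin ab -EFinD.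
Qed.

Lemma cs_int (a b : R) f : a < b -> {within `[a, b], continuous f} ->
  (\int[mu]_(x in `[a, b]) f x) ^+ 2 <= (b - a) * \int[mu]_(x in `[a, b]) (f x ^+ 2).
Proof.
move=> ab cf.
set I := \int[mu]_(x in _) f x; set J := \int[mu]_(x in _) (f x ^+ 2).
have L0 : 0 < b - a by rewrite subr_gt0.
set m := I / (b - a).
have cf2 : {within `[a, b], continuous (fun x => f x ^+ 2)}.
  have -> : (fun x => f x ^+ 2) = (fun x => f x * f x) by apply: funext => x; rewrite expr2.
  exact: wcM.
have H : 0 <= \int[mu]_(x in `[a, b]) ((f x - m) ^+ 2).
  by apply: Rintegral_ge0 => x _; exact: sqr_ge0.
have E : \int[mu]_(x in `[a, b]) ((f x - m) ^+ 2) =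
   J - (2 * m) * I + m ^+ 2 * (b - a).
  have -> : (fun x => (f x - m) ^+ 2) = (fun x => (f x ^+ 2 - (2 * m) * f x) + m ^+ 2).
    by apply: funext => x; ring.
  rewrite RintegralD //; last 2 first.
    apply: cint; apply: wcB => //; apply: wcM => //; exact: wc_cst.
    exact/cint/wc_cst.
  rewrite RintegralB //; last 2 first.
    exact: cint.
    apply: cint; apply: wcM => //; exact: wc_cst.
  rewrite RintegralZl //; last exact: cint.
  by rewrite Rintegral_cst // mu_itv // ltW.
have E2 : J - 2 * m * I + m ^+ 2 * (b - a) = J - I ^+ 2 / (b - a) by rewrite /m; field; rewrite gt_eqF.
move: H; rewrite E E2; rewrite subr_ge0 ler_pdivrMr // => H.
by rewrite mulrC.
Qed.

Lemma ftc2R (a b : R) f F : a < b -> {within `[a, b], continuous f} ->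
  {within `[a, b], continuous F} ->
  (forall x, a < x < b -> derivable F x 1 /\ derive1 F x = f x) ->
  \int[mu]_(x in `[a, b]) f x = F b - F a.
Proof.
move=> ab cf cF dF.
have := @continuous_FTC2 R f F a b ab cf.
case/(continuous_within_itvP _ ab): cF => cFi cFa cFb.
have dF' : derivable_oo_LRcontinuous F a b.
  split => //; move=> x; rewrite in_itv /= => /andP[ax xb].
  by case: (dF x); [rewrite ax xb|].
move=> /(_ dF'); rewrite /Rintegral => ->; last first.
  by move=> x; rewrite in_itv /= => /andP[ax xb]; case: (dF x) => //; rewrite ax xb.
by [].
Qed.

Definition prim (a : R) f (u : R) := \int[mu]_(t in `[a, u]) f t.

Lemma wc_sub (a b : R) f : {within `[a, +oo[, continuous f} -> a <= b ->
  {within `[a, b], continuous f}.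
Proof. move=> cf ab; apply: continuous_subspaceW cf; exact: subset_itvl. Qed.

Lemma wc_at (a b u : R) f : {within `[a, b], continuous f} -> a < u -> u < b ->
  {for u, continuous f}.
Proof.
move=> cf au ub; apply: (@within_continuous_continuous _ _ _ a b) => //.
- exact: lt_trans ub.
- by rewrite in_itv /= au.
Qed.

Lemma prim_deriv (a b u : R) f : {within `[a, b], continuous f} -> a < u -> u < b ->
  derivable (prim a f) u 1 /\ derive1 (prim a f) u = f u.
Proof.
move=> cf au ub.
exact: (@continuous_FTC1_closed R f a u b ub (cint cf) au (wc_at cf au ub)).
Qed.

Lemma prim_cont (a b : R) f : {within `[a, b], continuous f} -> a <= b ->
  {within `[a, b], continuous (prim a f)}.
Proof.
move=> cf ab.
exact: (@parameterized_integral_continuous R a b f ab (cint cf)).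
Qed.

Lemma prim_ge0 (a u : R) f : (forall t, a <= t -> 0 <= f t) -> 0 <= prim a f u.
Proof. move=> f0; apply: Rintegral_ge0 => t; rewrite /= in_itv /= => /andP[? _]; exact: f0. Qed.

Lemma prim0 (a : R) f : prim a f a = 0.
Proof. by rewrite /prim set_itv1 Rintegral_set1. Qed.

Lemma isdE x f df : is_derive x (1:R) f df -> derivable f x 1 /\ derive1 f x = df.
Proof. by move=> H; split; [exact: ex_derive|rewrite derive1E derive_val]. Qed.

Lemma isdI x f : derivable f x 1 -> is_derive x (1:R) f (derive1 f x).
Proof. by move=> H; rewrite derive1E; exact: derivableP. Qed.

Lemma isd_sum x n (F : 'I_n -> R -> R) (dF : 'I_n -> R) :
  (forall i, is_derive x (1:R) (F i) (dF i)) ->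
  is_derive x (1:R) (fun t => \sum_(i < n) F i t) (\sum_(i < n) dF i).
Proof.
move=> H; have -> : (fun t => \sum_(i < n) F i t) = \sum_(i < n) F i.
  by apply: funext => t; rewrite fct_sumE.
exact: is_derive_sum.
Qed.

Lemma isdD x f g df dg : is_derive x (1:R) f df -> is_derive x (1:R) g dg ->
  is_derive x (1:R) (fun t => f t + g t) (df + dg).
Proof. move=> H1 H2; exact: (is_deriveD H1 H2). Qed.

Lemma isdB x f g df dg : is_derive x (1:R) f df -> is_derive x (1:R) g dg ->
  is_derive x (1:R) (fun t => f t - g t) (df - dg).
Proof. move=> H1 H2; exact: (is_deriveB H1 H2). Qed.

Lemma isdM x f g df dg : is_derive x (1:R) f df -> is_derive x (1:R) g dg ->
  is_derive x (1:R) (fun t => f t * g t) (f x * dg + g x * df).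
Proof. move=> H1 H2; exact: (is_deriveM H1 H2). Qed.

Lemma isdZ x (c : R) f df : is_derive x (1:R) f df ->
  is_derive x (1:R) (fun t => c * f t) (c * df).
Proof. move=> H1; exact: (is_deriveZ c H1). Qed.

Lemma isdC x (c : R) : is_derive x (1:R) (fun _ => c) 0.
Proof. exact: is_derive_cst. Qed.

Lemma isd_shift x (c : R) f df : is_derive (x - c) (1:R) f df ->
  is_derive x (1:R) (fun t => f (t - c)) df.
Proof.
have E : (fun h : R => h^-1 *: (((fun t => f (t - c)) \o shift x) (h *: 1) - f (x - c)))
   = (fun h : R => h^-1 *: ((f \o shift (x - c)) (h *: 1) - f (x - c))).
  by apply: funext => h /=; rewrite addrA.
case=> d1 d2; split.
  by rewrite /derivable E.
by rewrite /derive E -d2.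
Qed.

Lemma sumN_const n (c : R) : \sum_(i < n) c = n%:R * c.
Proof. by rewrite sumr_const card_ord mulr_natl. Qed.

Lemma dcs n (y : 'I_n -> R) : (\sum_(i < n) y i) ^+ 2 <= n%:R * \sum_(i < n) y i ^+ 2.
Proof.
have H : 0 <= \sum_(i < n) \sum_(j < n) (y i - y j) ^+ 2.
  by apply: sumr_ge0 => i _; apply: sumr_ge0 => j _; exact: sqr_ge0.
have E : \sum_(i < n) \sum_(j < n) (y i - y j) ^+ 2 =
    2 * (n%:R * \sum_(i < n) y i ^+ 2) - 2 * (\sum_(i < n) y i) ^+ 2.
  have -> : \sum_(i < n) \sum_(j < n) (y i - y j) ^+ 2 =
     \sum_(i < n) (n%:R * y i ^+ 2 + \sum_(j < n) y j ^+ 2 - 2 * (y i * \sum_(j < n) y j)).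
    apply: eq_bigr => i _.
    rewrite mulr_sumr mulr_sumr -sumN_const -!big_split /= -sumrB.
    by apply: eq_bigr => j _; ring.
  rewrite sumrB big_split /= -mulr_sumr sumN_const -mulr_sumr -mulr_suml.
  ring.
rewrite E subr_ge0 in H; move: H.
by rewrite ler_pM2l // ltr0n.
Qed.

Lemma sum_antisym n (F : 'I_n -> 'I_n -> R) :
  (forall i j, F j i = - F i j) -> \sum_(i < n) \sum_(j < n) F i j = 0.
Proof.
move=> H.
have X : \sum_(i < n) \sum_(j < n) F i j = - \sum_(i < n) \sum_(j < n) F i j.
  rewrite [LHS]exchange_big /= -sumrN; apply: eq_bigr => i _.
  by rewrite -sumrN; apply: eq_bigr => j _; rewrite H.
lra.
Qed.

Lemma key n (a b : 'I_n -> R) (p : 'I_n -> 'I_n -> R) (c : R) :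
  (forall i j, p i j = p j i) ->
  let G i := c * \sum_(j < n) p i j * (b j - b i) in
  \sum_(i < n) \sum_(j < n) (a i - a j) * (G i - G j) =
  n%:R * c * \sum_(i < n) \sum_(j < n) p i j * ((a i - a j) * (b j - b i)).
Proof.
move=> ps G.
have sG : \sum_(i < n) G i = 0.
  rewrite /G -mulr_sumr sum_antisym ?mulr0 // => i j.
  by rewrite ps; ring.
have E1 : \sum_(i < n) \sum_(j < n) (a i - a j) * (G i - G j) =
    2 * \sum_(i < n) \sum_(j < n) (a i - a j) * G i.
  have A1 : \sum_(i < n) \sum_(j < n) (a i - a j) * (G i - G j) =
     \sum_(i < n) \sum_(j < n) (a i - a j) * G i -
     \sum_(i < n) \sum_(j < n) (a i - a j) * G j.
    rewrite -sumrB; apply: eq_bigr => i _; rewrite -sumrB.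
    by apply: eq_bigr => j _; ring.
  have A2 : \sum_(i < n) \sum_(j < n) (a i - a j) * G j =
     - \sum_(i < n) \sum_(j < n) (a i - a j) * G i.
    rewrite [LHS]exchange_big /= -sumrN; apply: eq_bigr => i _.
    by rewrite -sumrN; apply: eq_bigr => j _; ring.
  rewrite A1 A2; ring.
have E2 : \sum_(i < n) \sum_(j < n) (a i - a j) * G i =
    n%:R * \sum_(i < n) a i * G i.
  have -> : \sum_(i < n) \sum_(j < n) (a i - a j) * G i =
      \sum_(i < n) (n%:R * (a i * G i) - (\sum_(j < n) a j) * G i).
    apply: eq_bigr => i _.
    rewrite -mulr_suml sumrB sumN_const; ring.
  by rewrite sumrB -mulr_sumr -mulr_sumr sG mulr0 subr0.
have E3 : \sum_(i < n) a i * G i =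
    c * \sum_(i < n) \sum_(j < n) p i j * (a i * (b j - b i)).
  rewrite /G mulr_sumr; apply: eq_bigr => i _.
  rewrite mulr_sumr mulr_sumr mulr_sumr; apply: eq_bigr => j _; ring.
have E4 : \sum_(i < n) \sum_(j < n) p i j * ((a i - a j) * (b j - b i)) =
    2 * \sum_(i < n) \sum_(j < n) p i j * (a i * (b j - b i)).
  have B1 : \sum_(i < n) \sum_(j < n) p i j * ((a i - a j) * (b j - b i)) =
     \sum_(i < n) \sum_(j < n) p i j * (a i * (b j - b i)) +
     \sum_(i < n) \sum_(j < n) p j i * (a j * (b i - b j)).
    rewrite -big_split; apply: eq_bigr => i _; rewrite -big_split.
    by apply: eq_bigr => j _ /=; rewrite (ps j i); ring.
  by rewrite B1 [X in _ + X]exchange_big /=; ring.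
rewrite E1 E2 E3 E4; ring.
Qed.

Lemma t1 (p a b : R) : 0 < p -> p <= 1 -> p * (a * b) <= 2^-1 * a ^+ 2 + 2^-1 * b ^+ 2.
Proof.
move=> p0 p1.
have h1 : 0 <= p * (a - b) ^+ 2 by rewrite mulr_ge0 ?sqr_ge0 ?ltW.
have h2 : 0 <= (1 - p) * (a ^+ 2 + b ^+ 2) by apply: mulr_ge0; [lra | rewrite addr_ge0 ?sqr_ge0].
nra.
Qed.
Lemma t2 (p ai aj bi bj : R) : 0 < p -> p <= 1 ->
  p * ((ai - aj) * (bj - bi)) <= - (2^-1 * p * (bj - bi) ^+ 2) + (ai - bi) ^+ 2 + (aj - bj) ^+ 2.
Proof.
move=> p0 p1.
set e := (ai - bi) - (aj - bj).
have h1 : 0 <= p * ((bj - bi) - e) ^+ 2 by rewrite mulr_ge0 ?sqr_ge0 ?ltW.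
have h2 : 0 <= (1 - p) * e ^+ 2 by apply: mulr_ge0; [lra | rewrite sqr_ge0].
have h3 : 0 <= ((ai - bi) + (aj - bj)) ^+ 2 by rewrite sqr_ge0.
rewrite /e in h1 h2.
nra.
Qed.

Lemma Rint_sum (a b : R) n (F : 'I_n -> R -> R) :
  (forall i, {within `[a, b], continuous (F i)}) ->
  \int[mu]_(x in `[a, b]) (\sum_(i < n) F i x) = \sum_(i < n) \int[mu]_(x in `[a, b]) F i x.
Proof.
elim: n F => [|n IH] F cF.
  under eq_Rintegral do rewrite big_ord0.
  by rewrite big_ord0 Rintegral_cst // mul0r.
under eq_Rintegral do rewrite big_ord_recr /=.
rewrite RintegralD //; last 2 first.
- apply: cint; apply: (wc_sum (F := fun i => F (widen_ord (leqnSn n) i))) => i; exact: cF.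
- exact/cint/cF.
rewrite big_ord_recr /=; congr (_ + _).
exact: (IH (fun i => F (widen_ord (leqnSn n) i))).
Qed.

End Aux.

Section Main.
Variables (R : realType) (N d : nat) (lam tau : R) (psi : R -> R)
  (x v : 'I_N -> 'I_d -> R -> R).
Hypotheses (N0 : (0 < N)%N) (lam0 : 0 < lam) (tau0 : 0 < tau)
  (lt12 : lam * tau <= 2^-1)
  (psiB : forall r, 0 <= r -> 0 < psi r /\ psi r <= 1)
  (psiM : forall r s, 0 <= r -> r <= s -> psi s <= psi r)
  (psiC : {within `[0, +oo[, continuous psi})
  (xC : forall i k, {within `[- tau, +oo[, continuous (x i k)})
  (vC : forall i k, {within `[- tau, +oo[, continuous (v i k)})
  (xD : forall i k t, 0 < t ->
     derivable (x i k) t 1 /\ derive1 (x i k) t = v i k t)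
  (vD : forall i k t, 0 < t ->
     derivable (v i k) t 1 /\
     derive1 (v i k) t = lam / N%:R * \sum_(j < N)
        psi (enorm (posdiff x i j (t - tau))) * (v j k (t - tau) - v i k (t - tau))).

Notation mu := (@lebesgue_measure R).
Let S : set R := `[- tau, +oo[.

Definition ps i j t := psi (enorm (posdiff x i j t)).
Definition VV t := 2^-1 * \sum_(i < N) \sum_(j < N) \sum_(k < d) (v i k t - v j k t) ^+ 2.
Definition DD t := 2^-1 * \sum_(i < N) \sum_(j < N)
   (ps i j t * \sum_(k < d) (v j k t - v i k t) ^+ 2).
Definition gg i k t := lam / N%:R * \sum_(j < N) ps i j (t - tau) * (v j k (t - tau) - v i k (t - tau)).

Lemma enorm_sq (u : 'I_d -> R) : enorm u ^+ 2 = \sum_(k < d) u k ^+ 2.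
Proof. by rewrite /enorm sqr_sqrtr // sumr_ge0 // => k _; exact: sqr_ge0. Qed.

Lemma enorm_ge0 (u : 'I_d -> R) : 0 <= enorm u.
Proof. exact: sqrtr_ge0. Qed.

Lemma VE t : VCS v t = VV t.
Proof.
rewrite /VCS /VV; congr (_ * _); apply: eq_bigr => i _; apply: eq_bigr => j _.
by rewrite enorm_sq.
Qed.

Lemma DE t : DCS x v psi t = DD t.
Proof.
rewrite /DCS /DD; congr (_ * _); apply: eq_bigr => i _; apply: eq_bigr => j _.
by rewrite enorm_sq.
Qed.

Lemma ps_bnd i j t : 0 < ps i j t /\ ps i j t <= 1.
Proof. exact/psiB/enorm_ge0. Qed.

Lemma ps_sym i j t : ps i j t = ps j i t.
Proof.
rewrite /ps /enorm /posdiff; congr (psi (Num.sqrt _)).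
by apply: eq_bigr => k _; ring.
Qed.

Lemma VV_ge0 t : 0 <= VV t.
Proof.
rewrite /VV mulr_ge0 // ?invr_ge0 ?ler0n //.
by do 3! (apply: sumr_ge0 => ? _); exact: sqr_ge0.
Qed.

Lemma DD_ge0 t : 0 <= DD t.
Proof.
rewrite /DD mulr_ge0 // ?invr_ge0 ?ler0n //.
do 2! (apply: sumr_ge0 => ? _); apply: mulr_ge0; first exact/ltW/(ps_bnd _ _ _).1.
by apply: sumr_ge0 => ? _; exact: sqr_ge0.
Qed.

Lemma DD_le t : DD t <= VV t.
Proof.
rewrite /DD /VV ler_pM2l ?invr_gt0 ?ltr0n //.
apply: ler_sum => i _; apply: ler_sum => j _.
have [p0 p1] := ps_bnd i j t.
have -> : \sum_(k < d) (v j k t - v i k t) ^+ 2 = \sum_(k < d) (v i k t - v j k t) ^+ 2.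
  by apply: eq_bigr => k _; ring.
apply: ler_piMl => //.
by apply: sumr_ge0 => ? _; exact: sqr_ge0.
Qed.

Lemma wc_sq (A : set R) (f : R -> R) : {within A, continuous f} -> {within A, continuous (fun t => f t ^+ 2)}.
Proof.
move=> cf; have -> : (fun t => f t ^+ 2) = (fun t => f t * f t).
  by apply: funext => t; rewrite expr2.
exact: wcM.
Qed.

Lemma ps_wc i j : {within S, continuous (ps i j)}.
Proof.
apply: (@wcomp R S `[0, +oo[ psi (fun t => enorm (posdiff x i j t))) => //.
  apply: wc_sqrt; apply: wc_sum => k; apply: wc_sq; apply: wcB; exact: xC.
by move=> y _; rewrite /= in_itv /= andbT; exact: enorm_ge0.
Qed.

Lemma VV_wc : {within S, continuous VV}.
Proof.
apply: wcM; first exact: wc_cst.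
do 3! (apply: wc_sum => ?); apply: wc_sq; apply: wcB; exact: vC.
Qed.

Lemma DD_wc : {within S, continuous DD}.
Proof.
apply: wcM; first exact: wc_cst.
do 2! (apply: wc_sum => ?); apply: wcM; first exact: ps_wc.
apply: wc_sum => ?; apply: wc_sq; apply: wcB; exact: vC.
Qed.

Lemma shift_wc (f : R -> R) : {within S, continuous f} ->
    {within `[0, +oo[, continuous (fun t => f (t - tau))}.
Proof.
move=> cf; apply: (@wc_shift R `[0, +oo[ S f tau cf) => y; rewrite /= !in_itv /= !andbT.
rewrite /S /= in_itv /= andbT; lra.
Qed.

Lemma gg_wc i k : {within `[0, +oo[, continuous (gg i k)}.
Proof.
apply: wcM; first exact: wc_cst.
apply: wc_sum => j.
apply: (wcM (f := fun t => ps i j (t - tau))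
   (g := fun t => v j k (t - tau) - v i k (t - tau))).
  exact/shift_wc/ps_wc.
apply: (wcB (f := fun t => v j k (t - tau)) (g := fun t => v i k (t - tau))); exact/shift_wc/vC.
Qed.

Lemma vv_isd i k (t : R) : 0 < t -> is_derive t (1:R) (v i k) (gg i k t).
Proof. move=> t0; have [H1 H2] := vD i k t0; have := isdI H1; rewrite H2; exact. Qed.

Lemma sum3_mul (c : R) (F : 'I_N -> 'I_N -> 'I_d -> R) :
  c * \sum_(i < N) \sum_(j < N) \sum_(k < d) F i j k =
  \sum_(i < N) \sum_(j < N) \sum_(k < d) c * F i j k.
Proof.
rewrite mulr_sumr; apply: eq_bigr => i _; rewrite mulr_sumr; apply: eq_bigr => j _.
by rewrite mulr_sumr.
Qed.

Lemma sum3_x (F : 'I_N -> 'I_N -> 'I_d -> R) :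
  \sum_(i < N) \sum_(j < N) \sum_(k < d) F i j k =
  \sum_(k < d) \sum_(i < N) \sum_(j < N) F i j k.
Proof.
rewrite [RHS]exchange_big /=; apply: eq_bigr => i _.
by rewrite exchange_big.
Qed.

Definition Vd t := \sum_(i < N) \sum_(j < N) \sum_(k < d)
   (v i k t - v j k t) * (gg i k t - gg j k t).

Lemma VV_isd (t : R) : 0 < t -> is_derive t (1:R) VV (Vd t).
Proof.
move=> t0.
have H : is_derive t (1:R) VV (2^-1 * \sum_(i < N) \sum_(j < N) \sum_(k < d)
   ((v i k t - v j k t) * (gg i k t - gg j k t) + (v i k t - v j k t) * (gg i k t - gg j k t))).
  apply: isdZ; do 3! (apply: isd_sum => ?).
  exact: isdM (isdB (vv_isd _ _ t0) (vv_isd _ _ t0)) (isdB (vv_isd _ _ t0) (vv_isd _ _ t0)).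
suff -> : Vd t = 2^-1 * \sum_(i < N) \sum_(j < N) \sum_(k < d)
   ((v i k t - v j k t) * (gg i k t - gg j k t) + (v i k t - v j k t) * (gg i k t - gg j k t)) by [].
by rewrite sum3_mul /Vd; do 3! (apply: eq_bigr => ? _); field.
Qed.

Definition Yd t := lam * \sum_(i < N) \sum_(j < N) \sum_(k < d)
   ps i j (t - tau) * ((v i k t - v j k t) * (v j k (t - tau) - v i k (t - tau))).

Lemma Vd_Yd t : Vd t = Yd t.
Proof.
rewrite /Vd /Yd !sum3_x mulr_sumr; apply: eq_bigr => k _.
have := @key R N (fun i => v i k t) (fun i => v i k (t - tau)) (fun i j => ps i j (t - tau))
   (lam / N%:R) (fun i j => ps_sym i j (t - tau)).
rewrite /= => ->.
have -> : N%:R * (lam / N%:R) = lam by field; rewrite pnatr_eq0 -lt0n.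
by rewrite mulr_sumr; apply: eq_bigr => i _; rewrite mulr_sumr.
Qed.

Lemma sum3_split (F G : 'I_N -> 'I_N -> 'I_d -> R) :
  \sum_(i < N) \sum_(j < N) \sum_(k < d) F i j k + \sum_(i < N) \sum_(j < N) \sum_(k < d) G i j k =
  \sum_(i < N) \sum_(j < N) \sum_(k < d) (F i j k + G i j k).
Proof.
rewrite -big_split; apply: eq_bigr => i _; rewrite -big_split; apply: eq_bigr => j _.
by rewrite -big_split.
Qed.

Lemma sum3_le (F G : 'I_N -> 'I_N -> 'I_d -> R) :
  (forall i j k, F i j k <= G i j k) ->
  \sum_(i < N) \sum_(j < N) \sum_(k < d) F i j k <= \sum_(i < N) \sum_(j < N) \sum_(k < d) G i j k.
Proof.
move=> H; apply: ler_sum => i _; apply: ler_sum => j _; apply: ler_sum => k _; exact: H.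
Qed.

Lemma Y_early t : Yd t <= lam * (VV t + VV (t - tau)).
Proof.
rewrite /Yd /VV ler_pM2l // !sum3_mul sum3_split; apply: sum3_le => i j k.
have [p0 p1] := ps_bnd i j (t - tau).
have := t1 (v i k t - v j k t) (v j k (t - tau) - v i k (t - tau)) p0 p1.
by have -> : (v j k (t - tau) - v i k (t - tau)) ^+ 2 = (v i k (t - tau) - v j k (t - tau)) ^+ 2 by ring.
Qed.

Lemma Y_lyap t : Yd t <= - lam * DD (t - tau) +
   2 * lam * N%:R * \sum_(i < N) \sum_(k < d) (v i k t - v i k (t - tau)) ^+ 2.
Proof.
set s := t - tau.
have E : \sum_(i < N) \sum_(j < N) \sum_(k < d)
    ((- (2^-1 * ps i j s * (v j k s - v i k s) ^+ 2) + (v i k t - v i k s) ^+ 2) + (v j k t - v j k s) ^+ 2)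
  = - DD s + 2 * N%:R * \sum_(i < N) \sum_(k < d) (v i k t - v i k s) ^+ 2.
  rewrite -!sum3_split.
  have -> : \sum_(i < N) \sum_(j < N) \sum_(k < d) - (2^-1 * ps i j s * (v j k s - v i k s) ^+ 2) = - DD s.
    rewrite /DD -mulNr mulr_sumr; apply: eq_bigr => i _; rewrite mulr_sumr; apply: eq_bigr => j _.
    by rewrite !mulr_sumr; apply: eq_bigr => k _; ring.
  have -> : \sum_(i < N) \sum_(j < N) \sum_(k < d) (v i k t - v i k s) ^+ 2 =
     N%:R * \sum_(i < N) \sum_(k < d) (v i k t - v i k s) ^+ 2.
    by rewrite mulr_sumr; apply: eq_bigr => i _; rewrite sumN_const.
  have -> : \sum_(i < N) \sum_(j < N) \sum_(k < d) (v j k t - v j k s) ^+ 2 =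
     N%:R * \sum_(i < N) \sum_(k < d) (v i k t - v i k s) ^+ 2.
    by rewrite sumN_const.
  ring.
have -> : - lam * DD s + 2 * lam * N%:R * \sum_(i < N) \sum_(k < d) (v i k t - v i k s) ^+ 2
   = lam * (- DD s + 2 * N%:R * \sum_(i < N) \sum_(k < d) (v i k t - v i k s) ^+ 2) by ring.
rewrite -E /Yd ler_pM2l //; apply: sum3_le => i j k.
have [p0 p1] := ps_bnd i j s.
exact: t2.
Qed.

Lemma gg_bnd r : \sum_(i < N) \sum_(k < d) gg i k r ^+ 2 <= 2 * lam ^+ 2 / N%:R * DD (r - tau).
Proof.
set s := r - tau; set c := lam / N%:R.
have E : 2 * lam ^+ 2 / N%:R * DD s =
   c ^+ 2 * N%:R * \sum_(i < N) \sum_(j < N) \sum_(k < d) ps i j s * (v j k s - v i k s) ^+ 2.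
  rewrite /DD /c.
  have -> : \sum_(i < N) \sum_(j < N) \sum_(k < d) ps i j s * (v j k s - v i k s) ^+ 2 =
     \sum_(i < N) \sum_(j < N) (ps i j s * \sum_(k < d) (v j k s - v i k s) ^+ 2).
    by apply: eq_bigr => i _; apply: eq_bigr => j _; rewrite mulr_sumr.
  field; by rewrite pnatr_eq0 -lt0n.
rewrite E sum3_mul; apply: ler_sum => i _.
rewrite [leRHS]exchange_big /=; apply: ler_sum => k _.
rewrite -mulr_sumr /gg -/s -/c exprMn -mulrA ler_wpM2l ?sqr_ge0 //.
apply: le_trans (dcs _) _.
rewrite ler_wpM2l ?ler0n //; apply: ler_sum => j _.
have [p0 p1] := ps_bnd i j s.
rewrite exprMn ler_wpM2r ?sqr_ge0 //.
by rewrite expr2 ler_piMl // ltW.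
Qed.

Lemma a12 : 2 * (lam * tau) <= 1.
Proof.
have h : (2 : R) * 2^-1 = 1 by rewrite mulfV // pnatr_eq0.
by rewrite -[X in _ <= X]h ler_pM2l.
Qed.

Definition MM := sup (VCS v @` `[- tau, 0]).

Lemma MM_ub s : - tau <= s -> s <= 0 -> VV s <= MM.
Proof.
move=> s1 s2.
have c0 : {within `[- tau, 0], continuous VV}.
  apply: continuous_subspaceW VV_wc; exact: subset_itvl.
have mt : - tau <= 0 by rewrite oppr_le0 ltW.
have [c _ Hc] := EVT_max mt c0.
rewrite -VE; apply: ub_le_sup.
  exists (VV c) => y [z zi <-]; rewrite VE; apply: Hc; exact: zi.
by exists s => //; rewrite /= in_itv /= s1 s2.
Qed.

Lemma MM_ge0 : 0 <= MM.
Proof. by apply: le_trans (VV_ge0 0) (MM_ub _ _) => //; rewrite oppr_le0 ltW. Qed.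

Lemma early t : 0 <= t -> t <= tau -> VV t <= (1 + 4 * (lam * tau)) * MM.
Proof.
move=> t0 t1.
have c0 : {within `[0, tau], continuous VV}.
  apply: continuous_subspaceW VV_wc => y; rewrite /= !in_itv /= => /andP[y0 _].
  by rewrite /S /= in_itv /= andbT (le_trans _ y0) // oppr_le0 ltW.
have [c] := EVT_max (ltW tau0) c0; rewrite in_itv /= => /andP[c0' c1] Hc.
suff : VV c <= (1 + 4 * (lam * tau)) * MM.
  by apply: le_trans; apply: Hc; rewrite in_itv /= t0 t1.
have M0 := MM_ge0; have a0 : 0 < lam * tau by rewrite mulr_gt0.
move: c0'; rewrite le_eqVlt => /predU1P[<-|cpos].
  have h0 : VV 0 <= MM by apply: MM_ub => //; rewrite oppr_le0 ltW.
  nra.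
have c0c : {within `[0, c], continuous VV}.
  apply: continuous_subspaceW c0; exact: subset_itvl.
have dV : forall y, y \in `]0, c[ -> is_derive y (1:R) VV (Vd y).
  by move=> y; rewrite in_itv /= => /andP[y0 _]; exact: VV_isd.
have [xi] := MVT cpos dV c0c.
rewrite in_itv /= => /andP[xi0 xic] EV.
have h1 : Vd xi <= lam * (VV xi + VV (xi - tau)) by rewrite Vd_Yd; exact: Y_early.
have h2 : VV xi <= VV c by apply: Hc; rewrite in_itv /= ltW //= ltW // (lt_le_trans xic).
have h3 : VV (xi - tau) <= MM by apply: MM_ub; lra.
have h0 : VV 0 <= MM by apply: MM_ub => //; rewrite oppr_le0 ltW.
have h4 : 0 <= VV (xi - tau) := VV_ge0 _.
have h5 : 0 <= VV xi := VV_ge0 _.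
have h6 : Vd xi * c <= lam * (VV c + MM) * tau.
  have h7 : Vd xi <= lam * (VV c + MM) by nra.
  have h8 : 0 <= lam * (VV c + MM) by nra.
  nra.
rewrite subr0 in EV.
have h9 : VV c * (1 - lam * tau) <= MM * (1 + lam * tau) by nra.
have h10' : 0 <= 1 - 2 * (lam * tau) by have := a12; lra.
have h10 : 0 <= MM * (lam * tau * (1 - 2 * (lam * tau))).
  by apply: mulr_ge0 => //; apply: mulr_ge0 => //; exact: ltW.
have h11 : (VV c - (1 + 4 * (lam * tau)) * MM) * (1 - lam * tau) <= 0 by nra.
have h12 : 0 < 1 - lam * tau by have := a12; lra.
nra.
Qed.

Definition Dt r := DD (r - tau).
Definition PP := prim 0 Dt.
Definition QQ := prim 0 PP.

Lemma Dt_wc : {within `[0, +oo[, continuous Dt}.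
Proof. exact: (shift_wc DD_wc). Qed.

Lemma PP_wc b : 0 <= b -> {within `[0, b], continuous PP}.
Proof. move=> b0; exact: (prim_cont (wc_sub Dt_wc b0) b0). Qed.

Lemma QQ_wc b : 0 <= b -> {within `[0, b], continuous QQ}.
Proof. move=> b0; exact: (prim_cont (PP_wc b0) b0). Qed.

Lemma up1 (u : R) : 0 < u -> 0 <= u + 1 /\ u < u + 1.
Proof. move=> u0; split; [by rewrite addr_ge0 // ltW | by rewrite ltrDl]. Qed.

Lemma PP_d (u : R) : 0 < u -> is_derive u (1:R) PP (Dt u).
Proof.
move=> u0; have [h1 h2] := up1 u0.
have [H1 H2] := prim_deriv (wc_sub Dt_wc h1) u0 h2.
by have := isdI H1; rewrite H2.
Qed.

Lemma QQ_d (u : R) : 0 < u -> is_derive u (1:R) QQ (PP u).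
Proof.
move=> u0; have [h1 h2] := up1 u0.
have [H1 H2] := prim_deriv (PP_wc h1) u0 h2.
by have := isdI H1; rewrite H2.
Qed.

Lemma Dt_ge0 r : 0 <= Dt r.
Proof. exact: DD_ge0. Qed.

Lemma PP_ge0 u : 0 <= PP u.
Proof. apply: prim_ge0 => t _; exact: Dt_ge0. Qed.

Lemma QQ_ge0 u : 0 <= QQ u.
Proof. apply: prim_ge0 => t _; exact: PP_ge0. Qed.

Lemma PP_mono (a b : R) : 0 <= a -> a <= b -> PP a <= PP b.
Proof.
move=> a0 ab.
have cP : {within `[a, b], continuous PP}.
  apply: continuous_subspaceW (PP_wc (le_trans a0 ab)); exact: subset_itvr.
have dP : forall y, y \in `]a, b[ -> is_derive y (1:R) PP (Dt y).
  by move=> y; rewrite in_itv /= => /andP[ay _]; apply: PP_d; exact: le_lt_trans ay.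
have [xi _ E] := MVT_segment ab dP cP.
rewrite -subr_ge0 E mulr_ge0 ?Dt_ge0 //; by rewrite subr_ge0.
Qed.

Lemma QQ_inc t : tau <= t -> QQ t - QQ (t - tau) <= tau * PP t.
Proof.
move=> tt.
have a0 : 0 <= t - tau by rewrite subr_ge0.
have ab : t - tau <= t by rewrite lerBlDr lerDl ltW.
have cQ : {within `[t - tau, t], continuous QQ}.
  apply: continuous_subspaceW (QQ_wc (le_trans a0 ab)); exact: subset_itvr.
have dQ : forall y, y \in `]t - tau, t[ -> is_derive y (1:R) QQ (PP y).
  by move=> y; rewrite in_itv /= => /andP[ay _]; apply: QQ_d; exact: le_lt_trans ay.
have [xi] := MVT_segment ab dQ cQ.
rewrite in_itv /= => /andP[x1 x2] ->.
have -> : t - (t - tau) = tau by ring.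
rewrite mulrC ler_pM2l //; apply: PP_mono => //; exact: le_trans x1.
Qed.

Lemma PP_tau : PP tau <= tau * MM.
Proof.
have t0 := ltW tau0.
rewrite /PP /prim.
apply: le_trans (_ : \int[mu]_(r in `[0, tau]) MM <= _).
  apply: le_Rintegral => //.
  - exact/cint/(wc_sub Dt_wc t0).
  - exact/cint/wc_cst.
  move=> r; rewrite /= in_itv /= => /andP[r0 r1].
  apply: le_trans (DD_le _) (MM_ub _ _); rewrite /=; lra.
by rewrite Rintegral_cst // mu_itv // mulrC subr0.
Qed.

Lemma dl_bnd t : tau <= t ->
  \sum_(i < N) \sum_(k < d) (v i k t - v i k (t - tau)) ^+ 2 <=
  tau * (2 * lam ^+ 2 / N%:R) * (PP t - PP (t - tau)).
Proof.
move=> tt.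
have a0 : 0 <= t - tau by rewrite subr_ge0.
have ab : t - tau < t by rewrite ltrBlDr ltrDl.
have sub0 : `[t - tau, t] `<=` `[0, +oo[.
  by move=> y; rewrite /= !in_itv /= andbT => /andP[h _]; exact: le_trans h.
have subS : `[t - tau, t] `<=` S.
  move=> y /sub0; rewrite /S /= !in_itv /= !andbT => h.
  by apply: le_trans h; rewrite oppr_le0 ltW.
have gc : forall i k, {within `[t - tau, t], continuous (gg i k)}.
  by move=> i k; exact: (continuous_subspaceW sub0 (@gg_wc i k)).
have g2c : forall i k, {within `[t - tau, t], continuous (fun r => gg i k r ^+ 2)}.
  by move=> i k; apply: wc_sq.
have step1 : forall i k, (v i k t - v i k (t - tau)) ^+ 2 <=
    tau * \int[mu]_(r in `[t - tau, t]) (gg i k r ^+ 2).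
  move=> i k.
  have -> : v i k t - v i k (t - tau) = \int[mu]_(r in `[t - tau, t]) gg i k r.
    symmetry; apply: (ftc2R ab (gc i k) (continuous_subspaceW subS (@vC i k))).
    move=> y /andP[y1 y2]; apply: vD; exact: le_lt_trans y1.
  have := cs_int ab (gc i k).
  by have -> : t - (t - tau) = tau by ring.
have step2 : \sum_(i < N) \sum_(k < d) (v i k t - v i k (t - tau)) ^+ 2 <=
    tau * \int[mu]_(r in `[t - tau, t]) (\sum_(i < N) \sum_(k < d) gg i k r ^+ 2).
  rewrite Rint_sum; last first.
    by move=> i; apply: wc_sum => k; exact: g2c.
  rewrite mulr_sumr; apply: ler_sum => i _.
  rewrite Rint_sum // mulr_sumr; apply: ler_sum => k _; exact: step1.
have Dc : {within `[t - tau, t], continuous Dt}.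
  exact: (continuous_subspaceW sub0 Dt_wc).
have step3 : \int[mu]_(r in `[t - tau, t]) (\sum_(i < N) \sum_(k < d) gg i k r ^+ 2) <=
    \int[mu]_(r in `[t - tau, t]) (2 * lam ^+ 2 / N%:R * Dt r).
  apply: le_Rintegral => //.
  - apply: cint; apply: wc_sum => i; apply: wc_sum => k; exact: g2c.
  - apply: cint; apply: wcM => //; exact: wc_cst.
  - by move=> r _; exact: gg_bnd.
have step4 : \int[mu]_(r in `[t - tau, t]) (2 * lam ^+ 2 / N%:R * Dt r) =
    2 * lam ^+ 2 / N%:R * (PP t - PP (t - tau)).
  rewrite RintegralZl //; last exact: cint.
  congr (_ * _); apply: (ftc2R ab Dc).
  - apply: continuous_subspaceW (PP_wc (le_trans a0 (ltW ab))); exact: subset_itvr.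
  - move=> y /andP[y1 y2]; apply: isdE; apply: PP_d; exact: le_lt_trans y1.
apply: le_trans step2 _; rewrite -mulrA ler_pM2l // -step4 //.
Qed.

Definition cc := 4 * lam ^+ 3 * tau.
Definition EE t := VV t + cc * (tau * PP t - QQ t + QQ (t - tau)).

Lemma EE_d (t : R) : tau < t ->
  is_derive t (1:R) EE (Vd t + cc * (tau * Dt t - PP t + PP (t - tau))).
Proof.
move=> tt; have t0 : 0 < t by exact: lt_trans tt.
have t1 : 0 < t - tau by rewrite subr_gt0.
apply: isdD; first exact: VV_isd.
apply: isdZ; apply: isdD; first apply: isdB.
- apply: isdZ; exact: PP_d.
- exact: QQ_d.
- apply: isd_shift; exact: QQ_d.
Qed.

Lemma EE_d_le0 (t : R) : tau < t -> Vd t + cc * (tau * Dt t - PP t + PP (t - tau)) <= 0.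
Proof.
move=> tt; have tt' := ltW tt.
have h1 := Y_lyap t; have h2 := dl_bnd tt'; rewrite -Vd_Yd in h1.
have N0' : (0 : R) < N%:R by rewrite ltr0n.
have h3 : 2 * lam * N%:R * (tau * (2 * lam ^+ 2 / N%:R) * (PP t - PP (t - tau))) =
    cc * (PP t - PP (t - tau)) by rewrite /cc; field; rewrite gt_eqF.
have h4 : 2 * lam * N%:R * \sum_(i < N) \sum_(k < d) (v i k t - v i k (t - tau)) ^+ 2 <=
    cc * (PP t - PP (t - tau)) by rewrite -h3 ler_pM2l // !mulr_gt0.
have h5 : 0 <= Dt t := Dt_ge0 t.
have h6 : lam * (1 - cc * tau / lam) = lam * (1 - 4 * (lam * tau) ^+ 2)
  by rewrite /cc; field; rewrite gt_eqF.
have h7 : 0 <= 1 - 4 * (lam * tau) ^+ 2.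
  have := a12; have : 0 < lam * tau by rewrite mulr_gt0. nra.
have h8 : cc * tau * Dt t - lam * Dt t <= 0.
  have -> : cc * tau * Dt t - lam * Dt t = - (Dt t * (lam * (1 - 4 * (lam * tau) ^+ 2))).
    by rewrite /cc; ring.
  rewrite oppr_le0; apply: mulr_ge0 => //; apply: mulr_ge0 => //; exact: ltW.
rewrite /Dt in h5 h8 *.
nra.
Qed.

Lemma EE_wc t : tau <= t -> {within `[tau, t], continuous EE}.
Proof.
move=> tt; have t0 : 0 <= t by apply: le_trans tt; exact: ltW.
have s0 : `[tau, t] `<=` `[0, t].
  by apply: subset_itvr; rewrite bnd_simp ltW.
have sS : `[tau, t] `<=` S.
  move=> y; rewrite /S /= !in_itv /= andbT => /andP[h _].
  by apply: le_trans h; rewrite (le_trans _ (ltW tau0)) // oppr_le0 ltW.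
apply: wcD; first exact: (continuous_subspaceW sS VV_wc).
apply: wcM; first exact: wc_cst.
apply: wcD; first apply: wcB.
- apply: wcM; first exact: wc_cst.
  exact: (continuous_subspaceW s0 (PP_wc t0)).
- exact: (continuous_subspaceW s0 (QQ_wc t0)).
- apply: (@wc_shift R `[tau, t] `[0, t] QQ tau (QQ_wc t0)) => y.
  rewrite /= !in_itv /= => /andP[h1 h2]; rewrite subr_ge0 h1 /=.
  by rewrite lerBlDr (le_trans h2) // lerDl ltW.
Qed.

Lemma lyap t : tau <= t ->
  VV t <= (1 + 4 * (lam * tau) + 4 * (lam * tau) ^+ 3) * MM.
Proof.
move=> tt.
have M0 := MM_ge0; have a0 : 0 < lam * tau by rewrite mulr_gt0.
have e0 := early (ltW tau0) (lexx tau).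
have a3 : 0 <= 4 * (lam * tau) ^+ 3 * MM by rewrite !mulr_ge0 // ?exprn_ge0 // ltW.
move: tt; rewrite le_eqVlt => /predU1P[<-|tt].
  apply: le_trans e0 _; rewrite mulrDl.
  have : 0 <= 4 * (lam * tau) ^+ 3 * MM := a3. lra.
have cc0 : 0 <= cc by rewrite /cc !mulr_ge0 // ?exprn_ge0 // ltW.
have h1 : VV t <= EE t.
  rewrite /EE lerDl mulr_ge0 //.
  have := QQ_inc (ltW tt); lra.
have h2 : EE t <= EE tau.
  apply: (@ler0_derive1_le_cc R EE tau t).
  - move=> y; rewrite in_itv /= => /andP[y1 _]; exact: (isdE (EE_d y1)).1.
  - move=> y; rewrite in_itv /= => /andP[y1 _]; rewrite (isdE (EE_d y1)).2.
    exact: EE_d_le0.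
  - exact: EE_wc (ltW tt).
  - by rewrite in_itv /= lexx ltW.
  - by rewrite in_itv /= lexx ltW.
  - exact: ltW.
have h3 : EE tau <= (1 + 4 * (lam * tau) + 4 * (lam * tau) ^+ 3) * MM.
  rewrite /EE subrr /QQ prim0 addr0 -/QQ.
  have q0 := QQ_ge0 tau; have p0 := PP_tau.
  have h4 : cc * (tau * PP tau - QQ tau) <= cc * (tau * (tau * MM)).
    rewrite ler_wpM2l //; have := tau0; nra.
  have -> : (1 + 4 * (lam * tau) + 4 * (lam * tau) ^+ 3) * MM =
     (1 + 4 * (lam * tau)) * MM + cc * (tau * (tau * MM)) by rewrite /cc; ring.
  exact: lerD.
by apply: le_trans h1 (le_trans h2 h3).
Qed.

Lemma vbound t : 0 <= t -> VV t <= (1 + 4 * (lam * tau) + 4 * (lam * tau) ^+ 3) * MM.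
Proof.
move=> t0; have [tt|tt] := leP tau t; first exact: lyap.
apply: le_trans (early t0 (ltW tt)) _; rewrite ler_wpM2r ?MM_ge0 // lerDl.
by rewrite mulr_ge0 // exprn_ge0 // mulr_ge0 // ltW.
Qed.

Lemma sum_term n (F : 'I_n -> R) i0 : (forall i, 0 <= F i) -> F i0 <= \sum_(i < n) F i.
Proof.
move=> F0; rewrite (bigD1 i0) //= lerDl; apply: sumr_ge0 => i _; exact: F0.
Qed.

Lemma sum_two n (F : 'I_n -> R) i0 j0 : i0 != j0 -> (forall i, 0 <= F i) ->
  F i0 + F j0 <= \sum_(i < n) F i.
Proof.
move=> ij F0; rewrite (bigD1 i0) //= (bigD1 j0) /=; last by rewrite eq_sym.
rewrite addrA lerDl; apply: sumr_ge0 => i _; exact: F0.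
Qed.

Lemma pair_le i j t : \sum_(k < d) (v i k t - v j k t) ^+ 2 <= VV t.
Proof.
have F0 : forall a b, 0 <= \sum_(k < d) (v a k t - v b k t) ^+ 2.
  by move=> a b; apply: sumr_ge0 => k _; exact: sqr_ge0.
have [->|ij] := eqVneq i j.
  have -> : \sum_(k < d) (v j k t - v j k t) ^+ 2 = 0.
    by rewrite big1 // => k _; rewrite subrr expr0n.
  exact: VV_ge0.
have G0 : forall a, 0 <= \sum_(b < N) \sum_(k < d) (v a k t - v b k t) ^+ 2.
  by move=> a; apply: sumr_ge0 => b _; exact: F0.
have h0 := @sum_two N (fun a => \sum_(b < N) \sum_(k < d) (v a k t - v b k t) ^+ 2) i j ij G0.
have h1 := @sum_term N (fun b => \sum_(k < d) (v i k t - v b k t) ^+ 2) j (F0 i).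
have h2 := @sum_term N (fun b => \sum_(k < d) (v j k t - v b k t) ^+ 2) i (F0 j).
have h4 : \sum_(k < d) (v j k t - v i k t) ^+ 2 = \sum_(k < d) (v i k t - v j k t) ^+ 2.
  by apply: eq_bigr => k _; ring.
rewrite /= h4 in h2; rewrite /= in h0 h1.
rewrite /VV; lra.
Qed.

Lemma L0_ge : (2 * (lam * tau) + 1) * MM <= L0 x v psi lam tau.
Proof.
rewrite /L0 -/MM.
have M0 := MM_ge0.
have hexp : 1 <= expR (2 * lam * tau).
  by apply: le_trans (expR_ge1Dx _); rewrite lerDl mulr_ge0 // ?mulr_ge0 // ltW.
have I0 : 0 <= Rintegral lebesgue_measure `[- tau, 0]
      (fun theta => Rintegral lebesgue_measure `[theta, 0] (DCS x v psi)).
  apply: Rintegral_ge0 => th _; apply: Rintegral_ge0 => r _.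
  have h := DD_ge0 r; rewrite -DE in h; exact: h.
have c0 : 0 <= 4 * tau * lam ^+ 3 by rewrite !mulr_ge0 // ?exprn_ge0 // ltW.
have h1 : (2 * (lam * tau) + 1) * MM <= (2 * lam * tau + 1) * expR (2 * lam * tau) * MM.
  have -> : 2 * lam * tau + 1 = 2 * (lam * tau) + 1 by ring.
  have X0 : 0 <= 2 * (lam * tau) + 1 by rewrite addr_ge0 // mulr_ge0 // mulr_ge0 // ltW.
  have e1' : 0 <= expR (2 * lam * tau) - 1 by rewrite subr_ge0 hexp.
  have H := mulr_ge0 (mulr_ge0 X0 M0) e1'.
  nra.
apply: le_trans h1 _; rewrite lerDl; exact: mulr_ge0.
Qed.

Lemma vel_le i j t : 0 <= t ->
  Num.sqrt (\sum_(k < d) (v i k t - v j k t) ^+ 2) <= Num.sqrt (2 * L0 x v psi lam tau).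
Proof.
move=> t0.
have Lp : 0 <= 2 * L0 x v psi lam tau.
  apply: mulr_ge0 => //; apply: le_trans L0_ge; apply: mulr_ge0; last exact: MM_ge0.
  by rewrite addr_ge0 // mulr_ge0 // mulr_ge0 // ltW.
rewrite ler_sqrt //.
apply: le_trans (pair_le i j t) _; apply: le_trans (vbound t0) _.
apply: le_trans (_ : 2 * ((2 * (lam * tau) + 1) * MM) <= _); last by rewrite ler_pM2l // L0_ge.
have M0 := MM_ge0; have a0 : 0 < lam * tau by rewrite mulr_gt0.
have := a12; set a := lam * tau => h.
have h2 : 4 * a ^+ 3 <= 1.
  have h20 : 0 <= 2 * a by rewrite mulr_ge0 // ltW.
  have := exprn_ile1 3 h20 h; rewrite exprMn => h3.
  have e8 : (2 : R) ^+ 3 = 8 by rewrite !exprS expr0; ring.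
  rewrite e8 in h3.
  have : 0 <= a ^+ 3 by rewrite exprn_ge0 // ltW.
  lra.
nra.
Qed.

Lemma cs_unit (e w : 'I_d -> R) : \sum_(k < d) e k ^+ 2 = 1 ->
  \sum_(k < d) e k * w k <= Num.sqrt (\sum_(k < d) w k ^+ 2).
Proof.
move=> se.
have w0 : 0 <= \sum_(k < d) w k ^+ 2 by apply: sumr_ge0 => k _; exact: sqr_ge0.
set W := Num.sqrt _.
have W0 : 0 <= W := sqrtr_ge0 _.
have W2 : W ^+ 2 = \sum_(k < d) w k ^+ 2 by rewrite sqr_sqrtr.
have [Wz|Wnz] := eqVneq W 0.
  have S0 : \sum_(k < d) w k ^+ 2 = 0 by rewrite -W2 Wz expr0n.
  have wk : forall k, w k = 0.
    move=> k; have := @sum_term d (fun k => w k ^+ 2) k (fun k => sqr_ge0 (w k)).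
    rewrite S0 => h; have : w k ^+ 2 = 0 by apply/le_anti; rewrite h sqr_ge0.
    by move/eqP; rewrite sqrf_eq0 => /eqP.
  by rewrite big1 // => k _; rewrite wk mulr0.
have Wp : 0 < W by rewrite lt_def Wnz W0.
have H : 0 <= \sum_(k < d) (W * e k - w k) ^+ 2 by apply: sumr_ge0 => k _; exact: sqr_ge0.
have E : \sum_(k < d) (W * e k - w k) ^+ 2 =
   W ^+ 2 * \sum_(k < d) e k ^+ 2 - 2 * W * \sum_(k < d) e k * w k + \sum_(k < d) w k ^+ 2.
  rewrite !mulr_sumr -sumrB -big_split /=; apply: eq_bigr => k _; ring.
rewrite E se W2 in H.
have : 2 * W * \sum_(k < d) e k * w k <= 2 * W * W.
  rewrite -W2 in H; nra.
rewrite ler_pM2l //; by rewrite mulr_gt0.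
Qed.

Lemma xx_isd i k (r : R) : 0 < r -> is_derive r (1:R) (x i k) (v i k r).
Proof. move=> r0; have [H1 H2] := xD i k r0; have := isdI H1; rewrite H2; exact. Qed.

Lemma pos_bnd i j t : 0 < t ->
  enorm (posdiff x i j t) <= enorm (posdiff x i j 0) + Num.sqrt (2 * L0 x v psi lam tau) * t.
Proof.
move=> t0.
have sq0 : 0 <= Num.sqrt (2 * L0 x v psi lam tau) := sqrtr_ge0 _.
set n := enorm (posdiff x i j t).
have [nz|nnz] := eqVneq n 0.
  by rewrite nz addr_ge0 ?enorm_ge0 // mulr_ge0 // ltW.
have n0 : 0 < n by rewrite lt_def nnz enorm_ge0.
have hn2 : n ^+ 2 = \sum_(k < d) (x i k t - x j k t) ^+ 2 := enorm_sq (posdiff x i j t).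
pose e k := (x i k t - x j k t) / n.
have se : \sum_(k < d) e k ^+ 2 = 1.
  rewrite /e; under eq_bigr do rewrite expr_div_n.
  by rewrite -mulr_suml -hn2 divff // expf_neq0.
pose f r := \sum_(k < d) e k * (x i k r - x j k r).
have ft : f t = n.
  rewrite /f /e; under eq_bigr do rewrite mulrAC -expr2.
  by rewrite -mulr_suml -hn2 expr2 mulfK.
have f0 : f 0 <= enorm (posdiff x i j 0) := cs_unit (fun k => x i k 0 - x j k 0) se.
pose df r := \sum_(k < d) e k * (v i k r - v j k r).
have dF : forall y, y \in `]0, t[ -> is_derive y (1:R) f (df y).
  move=> y; rewrite in_itv /= => /andP[y0 _].
  apply: isd_sum => k; apply: isdZ; apply: isdB; exact: xx_isd.
have sS : `[0, t] `<=` S.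
  move=> y; rewrite /S /= !in_itv /= andbT => /andP[h _].
  by apply: le_trans h; rewrite oppr_le0 ltW.
have cF : {within `[0, t], continuous f}.
  apply: wc_sum => k; apply: wcM; first exact: wc_cst.
  by apply: wcB; exact: (continuous_subspaceW sS (@xC _ _)).
have [xi] := MVT t0 dF cF.
rewrite in_itv /= => /andP[xi0 _] EF.
have h1 : df xi <= Num.sqrt (2 * L0 x v psi lam tau).
  apply: le_trans (vel_le i j (ltW xi0)).
  exact: cs_unit.
rewrite ft subr0 in EF.
have : n = f 0 + df xi * t by rewrite -EF; ring.
move=> ->.
have : df xi * t <= Num.sqrt (2 * L0 x v psi lam tau) * t by rewrite ler_wpM2r // ltW.
lra.
Qed.

Lemma final t : tau < t ->
  psi (dX x 0 + Num.sqrt (2 * L0 x v psi lam tau) * t) <= phiCS x psi t.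
Proof.
move=> tt; have t0 : 0 < t by exact: lt_trans tt.
have sq0 : 0 <= Num.sqrt (2 * L0 x v psi lam tau) := sqrtr_ge0 _.
have dX0 : 0 <= dX x 0 by exact: bigmax_ge_id.
have arg0 : 0 <= dX x 0 + Num.sqrt (2 * L0 x v psi lam tau) * t.
  by rewrite addr_ge0 // mulr_ge0 // ltW.
have c1 := (psiB arg0).2.
apply: le_bigmin => // i _; apply: le_bigmin => // j _.
apply: psiM; first exact: enorm_ge0.
apply: le_trans (pos_bnd i j t0) _; rewrite lerD2r.
apply: le_trans (le_bigmax _ (fun j => enorm (posdiff x i j 0)) j) _.
exact: (le_bigmax _ (fun i => \big[Num.max/0]_(j < N) enorm (posdiff x i j 0)) i).
Qed.

End Main.

Theorem lemma3p8 (R : realType) (N d : nat) (lambda tau : R) (psi : R -> R)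
  (x v : 'I_N -> 'I_d -> R -> R) :
  (0 < N)%N -> (0 < d)%N ->
  0 < lambda -> 0 < tau -> lambda * tau <= 2^-1 ->
  (* psi : [0,oo) -> (0,oo), positive, nonincreasing, differentiable, <= 1 *)
  (forall r, 0 <= r -> 0 < psi r /\ psi r <= 1) ->
  (forall r s, 0 <= r -> r <= s -> psi s <= psi r) ->
  {within `[0, +oo[, continuous psi} ->
  (forall r, 0 < r -> derivable psi r 1) ->
  (* the solution is continuous on [-tau, oo) *)
  (forall i k, {within `[- tau, +oo[, continuous (x i k)}) ->
  (forall i k, {within `[- tau, +oo[, continuous (v i k)}) ->
  (* initial data are C^1 on (-tau, 0) *)
  (forall i k t, - tau < t < 0 -> derivable (x i k) t 1 /\ derivable (v i k) t 1) ->
  (forall i k, {in `]- tau, 0[, continuous (derive1 (x i k))}) ->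
  (forall i k, {in `]- tau, 0[, continuous (derive1 (v i k))}) ->
  (* the delayed Cucker-Smale system for t > 0 *)
  (forall i k t, 0 < t ->
     derivable (x i k) t 1 /\ derive1 (x i k) t = v i k t) ->
  (forall i k t, 0 < t ->
     derivable (v i k) t 1 /\
     derive1 (v i k) t = lambda / N%:R * \sum_(j < N)
        psi (enorm (posdiff x i j (t - tau))) * (v j k (t - tau) - v i k (t - tau))) ->
  forall t, tau < t ->
    psi (dX x 0 + Num.sqrt (2 * L0 x v psi lambda tau) * t) <= phiCS x psi t.
Proof.
move=> N0 d0 l0 t0 lt psiB psiM psiC psiD xC vC iD ixC ivC xD vD t tt.
exact: (final N0 l0 t0 lt psiB psiM psiC xC vC xD vD tt).
Qed.
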